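(* (Height-preserving inversion.) For all $n\geq1$, finite multisets of formulas $\Gamma,\Delta$, formulas $\phi,\psi$, classical formulas $\alpha$, and finite multisets $\Xi$ of classical formulas: (L$\neg$) $\vdash^n\Gamma,\neg\alpha\Rightarrow\Delta$ implies $\vdash^n\Gamma\Rightarrow\alpha,\Delta$; (R$\neg$) $\vdash^n\Gamma\Rightarrow\neg\alpha,\Delta$ implies $\vdash^n\Gamma,\alpha\Rightarrow\Delta$; (L$\wedge$) $\vdash^n\Gamma,\phi\wedge\psi\Rightarrow\Delta$ implies $\vdash^n\Gamma,\phi,\psi\Rightarrow\Delta$; (R$\wedge$) $\vdash^n\Gamma\Rightarrow\phi\wedge\psi,\Delta$ implies $\vdash^n\Gamma\Rightarrow\phi,\Delta$ and $\vdash^n\Gamma\Rightarrow\psi,\Delta$; (L$\vee$) $\vdash^n\Gamma,\phi\vee\psi\Rightarrow\Delta$ implies $\vdash^n\Gamma,\phi\Rightarrow\Delta$ and $\vdash^n\Gamma,\psi\Rightarrow\Delta$; (R$\vee$) $\vdash^n\Gamma\Rightarrow\phi\vee\psi,\Delta$ implies $\vdash^n\Gamma\Rightarrow\phi,\psi,\Delta$; (L$\mathbin{\backslash\!\!/}$) $\vdash^n\Gamma,\chi\{\phi_L\mathbin{\backslash\!\!/}\phi_R\}\Rightarrow\Delta$ implies $\vdash^n\Gamma,\chi\{\phi_L\}\Rightarrow\Delta$ and $\vdash^n\Gamma,\chi\{\phi_R\}\Rightarrow\Delta$; (R$\mathbin{\backslash\!\!/}$) $\vdash^n\Xi\Rightarrow\chi\{\phi_L\mathbin{\backslash\!\!/}\phi_R\},\Delta$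 implies $\vdash^n\Xi\Rightarrow\chi\{\phi_L\},\Delta$ or $\vdash^n\Xi\Rightarrow\chi\{\phi_R\},\Delta$. (Here $\chi\{\phi_L\mathbin{\backslash\!\!/}\phi_R\}$ is any formula with a designated occurrence of a subformula $\phi_L\mathbin{\backslash\!\!/}\phi_R$ not in the scope of a negation.)
   Context: Fix a countably infinite set $\mathsf{Prop}$ of propositional variables. Classical formulas are generated by $\alpha ::= p \mid \bot \mid \neg\alpha \mid \alpha\wedge\alpha \mid \alpha\vee\alpha$ with $p\in\mathsf{Prop}$. Formulas are generated by $\phi ::= \alpha \mid \phi\wedge\phi \mid \phi\vee\phi \mid \phi\mathbin{\backslash\!\!/}\phi$ where $\alpha$ is classical ($\vee$: split disjunction, $\mathbin{\backslash\!\!/}$: inquisitive disjunction). A sequent is $\Gamma\Rightarrow\Delta$ with $\Gamma,\Delta$ finite multisets of formulas; ''$\Gamma,\Delta$'' denotes multiset union. Deep-inference notation: for a formula $\chi$ with a designated occurrence of a subformula not in the scope of any negation, $\chi\{\eta\}$ denotes the result of replacing that occurrence by $\eta$. The cut-free calculus $\mathsf{GT}^-$ ($\alpha$ ranges over classical formulas, $\Lambda$ over multisets of classical formulas): axioms $\Gamma,p\Rightarrow p,\Delta$ and $\Gamma,\bot\Rightarrow\Delta$; (L$\neg$) from $\Gamma\Rightarrow\alpha,\Delta$ infer $\Gamma,\neg\alpha\Rightarrow\Delta$; (R$\neg$) from $\Gamma,\alpha\Rightarrow\Delta$ infer $\Gamma\Rightarrow\neg\alpha,\Delta$; (L$\wedge$)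 from $\Gamma,\phi,\psi\Rightarrow\Delta$ infer $\Gamma,\phi\wedge\psi\Rightarrow\Delta$; (R$\wedge$) from $\Gamma\Rightarrow\phi,\Lambda$ and $\Gamma\Rightarrow\psi,\Lambda$ infer $\Gamma\Rightarrow\phi\wedge\psi,\Lambda,\Delta$; (L$\vee$) from $\Gamma,\phi\Rightarrow\Lambda$ and $\Gamma,\psi\Rightarrow\Lambda$ infer $\Gamma,\phi\vee\psi\Rightarrow\Lambda,\Delta$; (R$\vee$) from $\Gamma\Rightarrow\phi,\psi,\Delta$ infer $\Gamma\Rightarrow\phi\vee\psi,\Delta$; (L$\mathbin{\backslash\!\!/}$) from $\Gamma,\chi\{\phi_L\}\Rightarrow\Delta$ and $\Gamma,\chi\{\phi_R\}\Rightarrow\Delta$ infer $\Gamma,\chi\{\phi_L\mathbin{\backslash\!\!/}\phi_R\}\Rightarrow\Delta$; (R$\mathbin{\backslash\!\!/}$) from $\Gamma\Rightarrow\chi\{\phi_i\},\Delta$ ($i\in\{L,R\}$) infer $\Gamma\Rightarrow\chi\{\phi_L\mathbin{\backslash\!\!/}\phi_R\},\Delta$. The height of a derivation consisting of a single axiom is $1$; otherwise it is $1$ plus the maximum height of the subderivations of the premises of its last rule. $\vdash^n\Gamma\Rightarrow\Delta$ means there is a $\mathsf{GT}^-$-derivation of $\Gamma\Rightarrow\Delta$ of height at most $n$. *)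

(* Defs.v *)
From Stdlib Require Import List Permutation.
Import ListNotations.

Inductive form : Type :=
| Var  : nat -> form
| Bot  : form
| Neg  : form -> form
| And  : form -> form -> form
| Or   : form -> form -> form
| Idis : form -> form -> form.

Fixpoint classical (a : form) : Prop :=
  match a with
  | Var _ | Bot => True
  | Neg b => classical b
  | And b c | Or b c => classical b /\ classical c
  | Idis _ _ => False
  end.

Fixpoint wf (f : form) : Prop :=
  match f with
  | Var _ | Bot => True
  | Neg b => classical b
  | And b c | Or b c | Idis b c => wf b /\ wf c
  end.

Definition wfs (G : list form) : Prop := Forall wf G.
Definition classicals (G : list form) : Prop := Forall classical G.

(* Deep-inference contexts chi{ } : a designated occurrence not in the scope of
   any negation (there is no constructor going under Neg). *)
Inductive ctx : Type :=
| Hole   : ctx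
| CAndL  : ctx -> form -> ctx
| CAndR  : form -> ctx -> ctx
| COrL   : ctx -> form -> ctx
| COrR   : form -> ctx -> ctx
| CIdisL : ctx -> form -> ctx
| CIdisR : form -> ctx -> ctx.

Fixpoint plug (c : ctx) (e : form) : form :=
  match c with
  | Hole => e
  | CAndL c' f => And (plug c' e) f
  | CAndR f c' => And f (plug c' e)
  | COrL c' f => Or (plug c' e) f
  | COrR f c' => Or f (plug c' e)
  | CIdisL c' f => Idis (plug c' e) f
  | CIdisR f c' => Idis f (plug c' e)
  end.

Fixpoint wfc (c : ctx) : Prop :=
  match c with
  | Hole => True
  | CAndL c' f | CAndR f c' | COrL c' f | COrR f c'
  | CIdisL c' f | CIdisR f c' => wfc c' /\ wf f
  end.

(* Sequents Gamma => Delta with multisets represented as lists up to permutation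
   (rule der_perm, which does not change the height).
   [der n G D] : there is a GT^- derivation of G => D of height at most n. *)
Inductive der : nat -> list form -> list form -> Prop :=
| der_perm : forall n G G' D D',
    der n G D -> Permutation G G' -> Permutation D D' -> der n G' D'
| der_ax : forall n G D p,
    der (S n) (Var p :: G) (Var p :: D)
| der_bot : forall n G D,
    der (S n) (Bot :: G) D
| der_Lneg : forall n G D a, classical a ->
    der n G (a :: D) -> der (S n) (Neg a :: G) D
| der_Rneg : forall n G D a, classical a ->
    der n (a :: G) D -> der (S n) G (Neg a :: D)
| der_Land : forall n G D f g,
    der n (f :: g :: G) D -> der (S n) (And f g :: G) D
| der_Rand : forall n G L D f g, classicals L ->
    der n G (f :: L) -> der n G (g :: L) -> der (S n) G (And f g :: L ++ D)
| der_Lor : forall n G L D f g, classicals L ->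
    der n (f :: G) L -> der n (g :: G) L -> der (S n) (Or f g :: G) (L ++ D)
| der_Ror : forall n G D f g,
    der n G (f :: g :: D) -> der (S n) G (Or f g :: D)
| der_Lidis : forall n G D c fL fR,
    der n (plug c fL :: G) D -> der n (plug c fR :: G) D ->
    der (S n) (plug c (Idis fL fR) :: G) D
| der_RidisL : forall n G D c fL fR,
    der n G (plug c fL :: D) -> der (S n) G (plug c (Idis fL fR) :: D)
| der_RidisR : forall n G D c fL fR,
    der n G (plug c fR :: D) -> der (S n) G (plug c (Idis fL fR) :: D).

(* Main.v *)
Require Import Defs.
From Stdlib Require Import List Permutation Lia.
Import ListNotations.

Definition form_eq_dec : forall x y : form, {x = y} + {x <> y}.
Proof. decide equality; decide equality. Qed.

Lemma cnt_cons a l x : count_occ form_eq_dec (a::l) x = if form_eq_dec a x then S (count_occ form_eq_dec l x) else count_occ form_eq_dec l x.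
Proof. reflexivity. Qed.
Lemma cnt_nil x : count_occ form_eq_dec [] x = 0.
Proof. reflexivity. Qed.

Ltac pcount :=
  let x := fresh "x" in
  lazymatch goal with |- ?g => tryif has_evar g then fail "evar" else idtac end;
  apply (Permutation_count_occ form_eq_dec); intro x;
  repeat match goal with H : Permutation _ _ |- _ =>
     let h := fresh "hc" in pose proof ((proj1 (Permutation_count_occ form_eq_dec _ _) H) x) as h; clear H end;
  repeat progress rewrite ?count_occ_app, ?cnt_cons, ?cnt_nil in *;
  repeat match goal with
   | |- context [form_eq_dec ?a ?b] => destruct (form_eq_dec a b)
   | H : context [form_eq_dec ?a ?b] |- _ => destruct (form_eq_dec a b)
   end;
  lia.

Lemma test (G D k : list form) p q : Permutation G (Var p :: k) -> Permutation (q :: D ++ G) (Var p :: D ++ q :: k).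
Proof. intros. pcount. Qed.

Lemma mono : forall n G D, der n G D -> der (S n) G D.
Proof.
  induction 1; try solve [econstructor; eauto].
Qed.

Lemma mono_le : forall n m G D, n <= m -> der n G D -> der m G D.
Proof. intros n m G D H; induction H; auto using mono. Qed.

Lemma weak : forall n G D, der n G D -> forall G2 D2, der n (G ++ G2) (D ++ D2).
Proof.
  induction 1; intros G2 D2; simpl.
  - eapply der_perm; [apply IHder| apply Permutation_app_tail; auto | apply Permutation_app_tail; auto].
  - apply der_ax.
  - apply der_bot.
  - apply der_Lneg; auto. apply (IHder G2 D2).
  - apply der_Rneg; auto. apply (IHder G2 D2).
  - apply der_Land. apply (IHder G2 D2).
  - rewrite <- app_assoc. apply der_Rand; auto.
    + specialize (IHder1 G2 []); rewrite app_nil_r in IHder1; exact IHder1.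
    + specialize (IHder2 G2 []); rewrite app_nil_r in IHder2; exact IHder2.
  - rewrite <- app_assoc. apply der_Lor; auto.
    + specialize (IHder1 G2 []); rewrite app_nil_r in IHder1; exact IHder1.
    + specialize (IHder2 G2 []); rewrite app_nil_r in IHder2; exact IHder2.
  - apply der_Ror. apply (IHder G2 D2).
  - apply der_Lidis; [apply (IHder1 G2 D2)|apply (IHder2 G2 D2)].
  - apply der_RidisL. apply (IHder G2 D2).
  - apply der_RidisR. apply (IHder G2 D2).
Qed.

Lemma weak' : forall n G D G2 D2 G' D', der n G D ->
  Permutation G' (G ++ G2) -> Permutation D' (D ++ D2) -> der n G' D'.
Proof. intros. eapply der_perm; [apply weak; eauto| |]; apply Permutation_sym; eauto. Qed.

Lemma dperm : forall n G D G' D', der n G D -> Permutation G G' -> Permutation D D' -> der n G' D'.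
Proof. intros; eapply der_perm; eauto. Qed.

Inductive lst : nat -> list form -> list form -> Prop :=
| l_ax : forall n G D G0 D0 p, Permutation G (Var p :: G0) -> Permutation D (Var p :: D0) -> lst (S n) G D
| l_bot : forall n G D G0, Permutation G (Bot :: G0) -> lst (S n) G D
| l_Lneg : forall n G D G0 a, classical a -> der n G0 (a :: D) -> Permutation G (Neg a :: G0) -> lst (S n) G D
| l_Rneg : forall n G D D0 a, classical a -> der n (a :: G) D0 -> Permutation D (Neg a :: D0) -> lst (S n) G D
| l_Land : forall n G D G0 f g, der n (f :: g :: G0) D -> Permutation G (And f g :: G0) -> lst (S n) G D
| l_Rand : forall n G D L D0 f g, classicals L -> der n G (f :: L) -> der n G (g :: L) ->
    Permutation D (And f g :: L ++ D0) -> lst (S n) G D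
| l_Lor : forall n G D G0 L D0 f g, classicals L -> der n (f :: G0) L -> der n (g :: G0) L ->
    Permutation G (Or f g :: G0) -> Permutation D (L ++ D0) -> lst (S n) G D
| l_Ror : forall n G D D0 f g, der n G (f :: g :: D0) -> Permutation D (Or f g :: D0) -> lst (S n) G D
| l_Lidis : forall n G D G0 c fL fR, der n (plug c fL :: G0) D -> der n (plug c fR :: G0) D ->
    Permutation G (plug c (Idis fL fR) :: G0) -> lst (S n) G D
| l_RidisL : forall n G D D0 c fL fR, der n G (plug c fL :: D0) ->
    Permutation D (plug c (Idis fL fR) :: D0) -> lst (S n) G D
| l_RidisR : forall n G D D0 c fL fR, der n G (plug c fR :: D0) ->
    Permutation D (plug c (Idis fL fR) :: D0) -> lst (S n) G D.

Ltac ptr := match goal with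
 | H1 : Permutation ?G ?G' |- Permutation ?G' _ =>
    eapply Permutation_trans; [apply Permutation_sym; exact H1| eassumption] end.

Lemma lst_perm : forall n G D G' D', lst n G D -> Permutation G G' -> Permutation D D' -> lst n G' D'.
Proof.
  intros n G D G' D' H H1 H2; destruct H.
  - eapply l_ax; [ptr|ptr].
  - eapply l_bot; ptr.
  - eapply l_Lneg; eauto. eapply dperm; eauto. ptr.
  - eapply l_Rneg; eauto. eapply dperm; eauto. ptr.
  - eapply l_Land; eauto. eapply dperm; eauto. ptr.
  - apply l_Rand with L D0 f g; [auto| exact (dperm _ _ _ _ _ H0 H1 (Permutation_refl _)) | exact (dperm _ _ _ _ _ H3 H1 (Permutation_refl _)) | ptr].
  - apply l_Lor with G0 L D0 f g; auto; ptr.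
  - eapply l_Ror; eauto. eapply dperm; eauto. ptr.
  - apply l_Lidis with G0 c fL fR; [ exact (dperm _ _ _ _ _ H (Permutation_refl _) H2) | exact (dperm _ _ _ _ _ H0 (Permutation_refl _) H2) | ptr].
  - apply l_RidisL with D0 c fL fR; [ exact (dperm _ _ _ _ _ H H1 (Permutation_refl _)) | ptr].
  - apply l_RidisR with D0 c fL fR; [ exact (dperm _ _ _ _ _ H H1 (Permutation_refl _)) | ptr].
Qed.

Lemma der_lst : forall n G D, der n G D -> lst n G D.
Proof.
  induction 1.
  - eapply lst_perm; eauto.
  - eapply l_ax; apply Permutation_refl.
  - eapply l_bot; apply Permutation_refl.
  - eapply l_Lneg; eauto.
  - eapply l_Rneg; eauto.
  - eapply l_Land; eauto.
  - apply l_Rand with L D f g; auto.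
  - apply l_Lor with G L D f g; auto.
  - eapply l_Ror; eauto.
  - apply l_Lidis with G c fL fR; auto.
  - apply l_RidisL with D c fL fR; auto.
  - apply l_RidisR with D c fL fR; auto.
Qed.

Lemma perm_cons_cases : forall (x y : form) l m, Permutation (x :: l) (y :: m) ->
  (x = y /\ Permutation l m) \/ exists k, Permutation l (y :: k) /\ Permutation m (x :: k).
Proof.
  intros x y l m H.
  assert (Hin : In y (x :: l)) by (apply (Permutation_in _ (Permutation_sym H)); left; auto).
  destruct Hin as [<-|Hin].
  - left; split; auto. eapply Permutation_cons_inv; eauto.
  - right. apply in_split in Hin as (l1 & l2 & ->). exists (l1 ++ l2). split.
    + pcount.
    + apply (Permutation_cons_inv (a:=y)). pcount.
Qed.

Lemma perm_app_cases : forall (x : form) l L M, Permutation (x :: l) (L ++ M) ->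
  (exists L1, Permutation L (x :: L1) /\ Permutation l (L1 ++ M)) \/
  (exists M1, Permutation M (x :: M1) /\ Permutation l (L ++ M1)).
Proof.
  intros x l L M H.
  assert (Hin : In x (L ++ M)) by (apply (Permutation_in _ H); left; auto).
  apply in_app_or in Hin as [Hin|Hin]; apply in_split in Hin as (l1 & l2 & ->).
  - left. exists (l1 ++ l2). split; [pcount|]. apply (Permutation_cons_inv (a:=x)). pcount.
  - right. exists (l1 ++ l2). split; [pcount|]. apply (Permutation_cons_inv (a:=x)). pcount.
Qed.

Lemma cls_perm : forall L L', classicals L -> Permutation L L' -> classicals L'.
Proof. intros L L' H P. eapply Permutation_Forall; eauto. Qed.

Lemma cls_tail : forall x L L1, classicals L -> Permutation L (x :: L1) -> classical x /\ classicals L1.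
Proof. intros x L L1 H P. apply (cls_perm _ _ H) in P. inversion P; auto. Qed.

Lemma cls_app : forall L M, classicals L -> classicals M -> classicals (L ++ M).
Proof. intros; apply Forall_app; auto. Qed.


Definition PL n X G D : Prop :=
 (exists a, X = Neg a /\ classical a /\ der n G (a::D)) \/
 (exists f g, X = And f g /\ der n (f::g::G) D) \/
 (exists f g L D0, X = Or f g /\ classicals L /\ Permutation D (L ++ D0) /\ der n (f::G) L /\ der n (g::G) L) \/
 (exists c fL fR, X = plug c (Idis fL fR) /\ der n (plug c fL :: G) D /\ der n (plug c fR :: G) D) \/
 (exists p, X = Var p /\ In (Var p) D) \/ X = Bot.

Lemma splitL n X G D YL ZR : classicals ZR ->
  (forall G D, der n (X::G) D -> der n (YL++G) (ZR++D)) ->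
  der (S n) (X::G) D -> der (S n) (YL++G) (ZR++D) \/ PL n X G D.
Proof.
  intros HZ IH H. apply der_lst in H. inversion H; subst.
  - destruct (perm_cons_cases _ _ _ _ H1) as [[-> _]|[k [Hk1 Hk2]]].
    + right. do 4 right. left. exists p; split; auto. apply (Permutation_in _ (Permutation_sym H2)); left; auto.
    + left. eapply dperm; [apply (der_ax n (YL ++ k) (ZR ++ D1) p) | pcount | pcount].
  - destruct (perm_cons_cases _ _ _ _ H1) as [[-> _]|[k [Hk1 Hk2]]].
    + right. do 5 right. auto.
    + left. eapply dperm; [apply (der_bot n (YL ++ k) (ZR ++ D)) | pcount | pcount].
  - destruct (perm_cons_cases _ _ _ _ H3) as [[-> Hp]|[k [Hk1 Hk2]]].
    + right. left. exists a; repeat split; auto. eapply dperm; [exact H2|pcount|pcount].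
    + left. assert (Hi := IH k (a :: D) (dperm _ _ _ _ _ H2 Hk2 (Permutation_refl _))).
      eapply dperm; [apply (der_Lneg n (YL ++ k) (ZR ++ D) a); auto; eapply dperm; [exact Hi|apply Permutation_refl|pcount] | pcount | pcount].
  - left. assert (Hi := IH (a :: G) D1 (dperm _ _ _ _ _ H2 (perm_swap _ _ _) (Permutation_refl _))).
    eapply dperm; [apply (der_Rneg n (YL ++ G) (ZR ++ D1) a); auto; eapply dperm; [exact Hi|pcount|apply Permutation_refl] | pcount | pcount].
  - destruct (perm_cons_cases _ _ _ _ H2) as [[-> Hp]|[k [Hk1 Hk2]]].
    + right. right. left. exists f, g; split; auto. eapply dperm; [exact H1|pcount|pcount].
    + left. assert (Hi := IH (f :: g :: k) D (dperm _ _ _ (X :: f :: g :: k) _ H1 ltac:(pcount) (Permutation_refl _))).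
      eapply dperm; [apply (der_Land n (YL ++ k) (ZR ++ D) f g); eapply dperm; [exact Hi|pcount|apply Permutation_refl] | pcount | pcount].
  - left. assert (Hi1 := IH G (f :: L) H2). assert (Hi2 := IH G (g :: L) H3).
    eapply dperm; [apply (der_Rand n (YL ++ G) (ZR ++ L) D1 f g); [apply cls_app; auto| eapply dperm; [exact Hi1|apply Permutation_refl|pcount]| eapply dperm; [exact Hi2|apply Permutation_refl|pcount]] | pcount | pcount].
  - destruct (perm_cons_cases _ _ _ _ H4) as [[-> Hp]|[k [Hk1 Hk2]]].
    + right. right. right. left. exists f, g, L, D1; repeat split; auto; [eapply dperm; [exact H2|pcount|pcount]|eapply dperm; [exact H3|pcount|pcount]].
    + left. assert (Hi1 := IH (f :: k) L (dperm _ _ _ (X :: f :: k) _ H2 ltac:(pcount) (Permutation_refl _))).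
      assert (Hi2 := IH (g :: k) L (dperm _ _ _ (X :: g :: k) _ H3 ltac:(pcount) (Permutation_refl _))).
      eapply dperm; [apply (der_Lor n (YL ++ k) (ZR ++ L) D1 f g); [apply cls_app; auto| eapply dperm; [exact Hi1|pcount|apply Permutation_refl]| eapply dperm; [exact Hi2|pcount|apply Permutation_refl]] | pcount | pcount].
  - left. assert (Hi := IH G (f :: g :: D1) H1).
    eapply dperm; [apply (der_Ror n (YL ++ G) (ZR ++ D1) f g); eapply dperm; [exact Hi|apply Permutation_refl|pcount] | pcount | pcount].
  - destruct (perm_cons_cases _ _ _ _ H3) as [[-> Hp]|[k [Hk1 Hk2]]].
    + right. right. right. right. left. exists c, fL, fR; repeat split; auto; [eapply dperm; [exact H1|pcount|pcount]|eapply dperm; [exact H2|pcount|pcount]].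
    + left. assert (Hi1 := IH (plug c fL :: k) D (dperm _ _ _ (X :: plug c fL :: k) _ H1 ltac:(pcount) (Permutation_refl _))).
      assert (Hi2 := IH (plug c fR :: k) D (dperm _ _ _ (X :: plug c fR :: k) _ H2 ltac:(pcount) (Permutation_refl _))).
      eapply dperm; [apply (der_Lidis n (YL ++ k) (ZR ++ D) c fL fR); [eapply dperm; [exact Hi1|pcount|apply Permutation_refl]| eapply dperm; [exact Hi2|pcount|apply Permutation_refl]] | pcount | pcount].
  - left. assert (Hi := IH G (plug c fL :: D1) H1).
    eapply dperm; [apply (der_RidisL n (YL ++ G) (ZR ++ D1) c fL fR); eapply dperm; [exact Hi|apply Permutation_refl|pcount] | pcount | pcount].
  - left. assert (Hi := IH G (plug c fR :: D1) H1).
    eapply dperm; [apply (der_RidisR n (YL ++ G) (ZR ++ D1) c fL fR); eapply dperm; [exact Hi|apply Permutation_refl|pcount] | pcount | pcount].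
Qed.

Definition PR n X G D : Prop :=
 (exists a, X = Neg a /\ classical a /\ der n (a::G) D) \/
 (exists f g L D0, X = And f g /\ classicals L /\ Permutation D (L ++ D0) /\ der n G (f::L) /\ der n G (g::L)) \/
 (exists f g, X = Or f g /\ der n G (f::g::D)) \/
 (exists c fL fR, X = plug c (Idis fL fR) /\ (der n G (plug c fL :: D) \/ der n G (plug c fR :: D))) \/
 (exists p, X = Var p /\ In (Var p) G).

Lemma splitR n X G D YL ZR : (classical X -> classicals ZR) ->
  (forall G D, der n G (X::D) -> der n (YL++G) (ZR++D)) ->
  der (S n) G (X::D) -> der (S n) (YL++G) (ZR++D) \/ PR n X G D.
Proof.
  intros HZ IH H. apply der_lst in H. inversion H; subst.
  - destruct (perm_cons_cases _ _ _ _ H2) as [[-> _]|[k [Hk1 Hk2]]].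
    + right. do 4 right. exists p; split; auto. apply (Permutation_in _ (Permutation_sym H1)); left; auto.
    + left. eapply dperm; [apply (der_ax n (YL ++ G1) (ZR ++ k) p) | pcount | pcount].
  - left. eapply dperm; [apply (der_bot n (YL ++ G1) (ZR ++ D)) | pcount | pcount].
  - left. assert (Hi := IH G1 (a :: D) (dperm _ _ _ _ (X :: a :: D) H2 (Permutation_refl _) ltac:(pcount))).
    eapply dperm; [apply (der_Lneg n (YL ++ G1) (ZR ++ D) a); auto; eapply dperm; [exact Hi|apply Permutation_refl|pcount] | pcount | pcount].
  - destruct (perm_cons_cases _ _ _ _ H3) as [[-> Hp]|[k [Hk1 Hk2]]].
    + right. left. exists a; repeat split; auto. eapply dperm; [exact H2|pcount|pcount].
    + left. assert (Hi := IH (a :: G) k (dperm _ _ _ _ (X :: k) H2 (Permutation_refl _) ltac:(pcount))).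
      eapply dperm; [apply (der_Rneg n (YL ++ G) (ZR ++ k) a); auto; eapply dperm; [exact Hi|pcount|apply Permutation_refl] | pcount | pcount].
  - left. assert (Hi := IH (f :: g :: G1) D H1).
    eapply dperm; [apply (der_Land n (YL ++ G1) (ZR ++ D) f g); eapply dperm; [exact Hi|pcount|apply Permutation_refl] | pcount | pcount].
  - destruct (perm_cons_cases _ _ _ _ H4) as [[-> Hp]|[k [Hk1 Hk2]]].
    + right. right. left. exists f, g, L, D1; repeat split; auto.
    + left. destruct (perm_app_cases _ _ _ _ (Permutation_sym Hk2)) as [[L1 [Ha Hb]]|[M1 [Ha Hb]]].
      * destruct (cls_tail _ _ _ H1 Ha) as [HX HL1].
        assert (Hi1 := IH G (f :: L1) (dperm _ _ _ _ (X :: f :: L1) H2 (Permutation_refl _) ltac:(pcount))).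
        assert (Hi2 := IH G (g :: L1) (dperm _ _ _ _ (X :: g :: L1) H3 (Permutation_refl _) ltac:(pcount))).
        eapply dperm; [apply (der_Rand n (YL ++ G) (ZR ++ L1) D1 f g); [apply cls_app; auto| eapply dperm; [exact Hi1|apply Permutation_refl|pcount]| eapply dperm; [exact Hi2|apply Permutation_refl|pcount]] | pcount | pcount].
      * eapply dperm; [apply (der_Rand n (YL ++ G) L (ZR ++ M1) f g); [auto| eapply (weak' _ _ _ YL []); [exact H2|pcount|pcount]| eapply (weak' _ _ _ YL []); [exact H3|pcount|pcount]] | pcount | pcount].
  - left. destruct (perm_app_cases _ _ _ _ H5) as [[L1 [Ha Hb]]|[M1 [Ha Hb]]].
    + destruct (cls_tail _ _ _ H1 Ha) as [HX HL1].
      assert (Hi1 := IH (f :: G1) L1 (dperm _ _ _ _ (X :: L1) H2 (Permutation_refl _) ltac:(pcount))).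
      assert (Hi2 := IH (g :: G1) L1 (dperm _ _ _ _ (X :: L1) H3 (Permutation_refl _) ltac:(pcount))).
      eapply dperm; [apply (der_Lor n (YL ++ G1) (ZR ++ L1) D1 f g); [apply cls_app; auto| eapply dperm; [exact Hi1|pcount|apply Permutation_refl]| eapply dperm; [exact Hi2|pcount|apply Permutation_refl]] | pcount | pcount].
    + eapply dperm; [apply (der_Lor n (YL ++ G1) L (ZR ++ M1) f g); [auto| eapply (weak' _ _ _ YL []); [exact H2|pcount|pcount]| eapply (weak' _ _ _ YL []); [exact H3|pcount|pcount]] | pcount | pcount].
  - destruct (perm_cons_cases _ _ _ _ H2) as [[-> Hp]|[k [Hk1 Hk2]]].
    + right. right. right. left. exists f, g; split; auto. eapply dperm; [exact H1|pcount|pcount].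
    + left. assert (Hi := IH G (f :: g :: k) (dperm _ _ _ _ (X :: f :: g :: k) H1 (Permutation_refl _) ltac:(pcount))).
      eapply dperm; [apply (der_Ror n (YL ++ G) (ZR ++ k) f g); eapply dperm; [exact Hi|apply Permutation_refl|pcount] | pcount | pcount].
  - left. assert (Hi1 := IH (plug c fL :: G1) D H1). assert (Hi2 := IH (plug c fR :: G1) D H2).
    eapply dperm; [apply (der_Lidis n (YL ++ G1) (ZR ++ D) c fL fR); [eapply dperm; [exact Hi1|pcount|apply Permutation_refl]|eapply dperm; [exact Hi2|pcount|apply Permutation_refl]] | pcount | pcount].
  - destruct (perm_cons_cases _ _ _ _ H2) as [[-> Hp]|[k [Hk1 Hk2]]].
    + right. right. right. right. left. exists c, fL, fR; split; auto. left. eapply dperm; [exact H1|pcount|pcount].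
    + left. assert (Hi := IH G (plug c fL :: k) (dperm _ _ _ _ (X :: plug c fL :: k) H1 (Permutation_refl _) ltac:(pcount))).
      eapply dperm; [apply (der_RidisL n (YL ++ G) (ZR ++ k) c fL fR); eapply dperm; [exact Hi|apply Permutation_refl|pcount] | pcount | pcount].
  - destruct (perm_cons_cases _ _ _ _ H2) as [[-> Hp]|[k [Hk1 Hk2]]].
    + right. right. right. right. left. exists c, fL, fR; split; auto. right. eapply dperm; [exact H1|pcount|pcount].
    + left. assert (Hi := IH G (plug c fR :: k) (dperm _ _ _ _ (X :: plug c fR :: k) H1 (Permutation_refl _) ltac:(pcount))).
      eapply dperm; [apply (der_RidisR n (YL ++ G) (ZR ++ k) c fL fR); eapply dperm; [exact Hi|apply Permutation_refl|pcount] | pcount | pcount].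
Qed.

Lemma overlapL : forall c (Q Q' : form -> Prop),
 (forall x, Q x -> Q' x) ->
 (forall c x y, Q (plug c x) -> Q (plug c y) -> Q' (plug c (Idis x y))) ->
 (forall c x y, Q (plug c (Idis x y)) -> Q (plug c x) /\ Q (plug c y)) ->
 forall fL fR c' gL gR, plug c (Idis fL fR) = plug c' (Idis gL gR) ->
 Q (plug c' gL) -> Q (plug c' gR) -> Q' (plug c fL) /\ Q' (plug c fR).
Proof.
  induction c as [|c IH h|h c IH|c IH h|h c IH|c IH h|h c IH];
  intros Q Q' Hm Hr Hi fL fR c' gL gR E HL HR;
  destruct c' as [|c' k|k c'|c' k|k c'|c' k|k c']; simpl in *; try discriminate E;
  injection E; intros; subst.
  - auto.
  -
    destruct (Hi Hole _ _ HL) as [A1 A2]. destruct (Hi Hole _ _ HR) as [B1 B2]. simpl in *.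
    split; [apply (Hr c'); auto | auto].
  - destruct (Hi Hole _ _ HL) as [A1 A2]. destruct (Hi Hole _ _ HR) as [B1 B2]. simpl in *.
    split; [auto | apply (Hr c'); auto].
  -
    apply (IH (fun x => Q (And x k)) (fun x => Q' (And x k))) with c' gL gR; auto.
    + intros c0 x y; apply (Hr (CAndL c0 k)).
    + intros c0 x y; apply (Hi (CAndL c0 k)).
  - (* CAndL vs CAndR : h = plug c' Ig, k = plug c If *)
    destruct (Hi (CAndL c (plug c' gL)) _ _ HL) as [A1 A2]. destruct (Hi (CAndL c (plug c' gR)) _ _ HR) as [B1 B2]. simpl in *.
    split; [apply (Hr (CAndR (plug c fL) c')) | apply (Hr (CAndR (plug c fR) c'))]; auto.
  - destruct (Hi (CAndR (plug c' gL) c) _ _ HL) as [A1 A2]. destruct (Hi (CAndR (plug c' gR) c) _ _ HR) as [B1 B2]. simpl in *.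
    split; [apply (Hr (CAndL c' (plug c fL))) | apply (Hr (CAndL c' (plug c fR)))]; auto.
  - apply (IH (fun x => Q (And k x)) (fun x => Q' (And k x))) with c' gL gR; auto.
    + intros c0 x y; apply (Hr (CAndR k c0)).
    + intros c0 x y; apply (Hi (CAndR k c0)).
  - apply (IH (fun x => Q (Or x k)) (fun x => Q' (Or x k))) with c' gL gR; auto.
    + intros c0 x y; apply (Hr (COrL c0 k)).
    + intros c0 x y; apply (Hi (COrL c0 k)).
  - destruct (Hi (COrL c (plug c' gL)) _ _ HL) as [A1 A2]. destruct (Hi (COrL c (plug c' gR)) _ _ HR) as [B1 B2]. simpl in *.
    split; [apply (Hr (COrR (plug c fL) c')) | apply (Hr (COrR (plug c fR) c'))]; auto.
  - destruct (Hi (COrR (plug c' gL) c) _ _ HL) as [A1 A2]. destruct (Hi (COrR (plug c' gR) c) _ _ HR) as [B1 B2]. simpl in *.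
    split; [apply (Hr (COrL c' (plug c fL))) | apply (Hr (COrL c' (plug c fR)))]; auto.
  - apply (IH (fun x => Q (Or k x)) (fun x => Q' (Or k x))) with c' gL gR; auto.
    + intros c0 x y; apply (Hr (COrR k c0)).
    + intros c0 x y; apply (Hi (COrR k c0)).
  - (* CIdisL vs Hole: gL = plug c If, gR = h *)
    destruct (Hi c _ _ HL) as [A1 A2].
    split; [apply (Hr Hole) | apply (Hr Hole)]; auto.
  - apply (IH (fun x => Q (Idis x k)) (fun x => Q' (Idis x k))) with c' gL gR; auto.
    + intros c0 x y; apply (Hr (CIdisL c0 k)).
    + intros c0 x y; apply (Hi (CIdisL c0 k)).
  - destruct (Hi (CIdisL c (plug c' gL)) _ _ HL) as [A1 A2]. destruct (Hi (CIdisL c (plug c' gR)) _ _ HR) as [B1 B2]. simpl in *.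
    split; [apply (Hr (CIdisR (plug c fL) c')) | apply (Hr (CIdisR (plug c fR) c'))]; auto.
  - destruct (Hi c _ _ HR) as [A1 A2].
    split; [apply (Hr Hole) | apply (Hr Hole)]; auto.
  - destruct (Hi (CIdisR (plug c' gL) c) _ _ HL) as [A1 A2]. destruct (Hi (CIdisR (plug c' gR) c) _ _ HR) as [B1 B2]. simpl in *.
    split; [apply (Hr (CIdisL c' (plug c fL))) | apply (Hr (CIdisL c' (plug c fR)))]; auto.
  - apply (IH (fun x => Q (Idis k x)) (fun x => Q' (Idis k x))) with c' gL gR; auto.
    + intros c0 x y; apply (Hr (CIdisR k c0)).
    + intros c0 x y; apply (Hi (CIdisR k c0)).
Qed.

Lemma overlapR : forall c (Q Q' : form -> Prop),
 (forall x, Q x -> Q' x) ->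
 (forall c x y, Q (plug c x) -> Q' (plug c (Idis x y))) ->
 (forall c x y, Q (plug c y) -> Q' (plug c (Idis x y))) ->
 (forall c x y, Q (plug c (Idis x y)) -> Q (plug c x) \/ Q (plug c y)) ->
 forall fL fR c' gL gR, plug c (Idis fL fR) = plug c' (Idis gL gR) ->
 (Q (plug c' gL) \/ Q (plug c' gR)) -> Q' (plug c fL) \/ Q' (plug c fR).
Proof.
  induction c as [|c IH h|h c IH|c IH h|h c IH|c IH h|h c IH];
  intros Q Q' Hm HrL HrR Hi fL fR c' gL gR E HH;
  destruct c' as [|c' k|k c'|c' k|k c'|c' k|k c']; simpl in *; try discriminate E;
  injection E; intros; subst.
  - destruct HH; auto.
  - destruct HH as [HH|HH]; destruct (Hi Hole _ _ HH) as [A|A]; simpl in *;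
      [left; apply (HrL c'); auto | right; auto | left; apply (HrR c'); auto | right; auto].
  - destruct HH as [HH|HH]; destruct (Hi Hole _ _ HH) as [A|A]; simpl in *;
      [left; auto | right; apply (HrL c'); auto | left; auto | right; apply (HrR c'); auto].
  - apply (IH (fun x => Q (And x k)) (fun x => Q' (And x k))) with c' gL gR; auto.
    + intros c0 x y; apply (HrL (CAndL c0 k)).
    + intros c0 x y; apply (HrR (CAndL c0 k)).
    + intros c0 x y; apply (Hi (CAndL c0 k)).
  - destruct HH as [HH|HH].
    + destruct (Hi (CAndL c (plug c' gL)) _ _ HH) as [A|A]; simpl in *;
      [left; apply (HrL (CAndR (plug c fL) c')) | right; apply (HrL (CAndR (plug c fR) c'))]; auto.
    + destruct (Hi (CAndL c (plug c' gR)) _ _ HH) as [A|A]; simpl in *;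
      [left; apply (HrR (CAndR (plug c fL) c')) | right; apply (HrR (CAndR (plug c fR) c'))]; auto.
  - destruct HH as [HH|HH].
    + destruct (Hi (CAndR (plug c' gL) c) _ _ HH) as [A|A]; simpl in *;
      [left; apply (HrL (CAndL c' (plug c fL))) | right; apply (HrL (CAndL c' (plug c fR)))]; auto.
    + destruct (Hi (CAndR (plug c' gR) c) _ _ HH) as [A|A]; simpl in *;
      [left; apply (HrR (CAndL c' (plug c fL))) | right; apply (HrR (CAndL c' (plug c fR)))]; auto.
  - apply (IH (fun x => Q (And k x)) (fun x => Q' (And k x))) with c' gL gR; auto.
    + intros c0 x y; apply (HrL (CAndR k c0)).
    + intros c0 x y; apply (HrR (CAndR k c0)).
    + intros c0 x y; apply (Hi (CAndR k c0)).
  - apply (IH (fun x => Q (Or x k)) (fun x => Q' (Or x k))) with c' gL gR; auto.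
    + intros c0 x y; apply (HrL (COrL c0 k)).
    + intros c0 x y; apply (HrR (COrL c0 k)).
    + intros c0 x y; apply (Hi (COrL c0 k)).
  - destruct HH as [HH|HH].
    + destruct (Hi (COrL c (plug c' gL)) _ _ HH) as [A|A]; simpl in *;
      [left; apply (HrL (COrR (plug c fL) c')) | right; apply (HrL (COrR (plug c fR) c'))]; auto.
    + destruct (Hi (COrL c (plug c' gR)) _ _ HH) as [A|A]; simpl in *;
      [left; apply (HrR (COrR (plug c fL) c')) | right; apply (HrR (COrR (plug c fR) c'))]; auto.
  - destruct HH as [HH|HH].
    + destruct (Hi (COrR (plug c' gL) c) _ _ HH) as [A|A]; simpl in *;
      [left; apply (HrL (COrL c' (plug c fL))) | right; apply (HrL (COrL c' (plug c fR)))]; auto.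
    + destruct (Hi (COrR (plug c' gR) c) _ _ HH) as [A|A]; simpl in *;
      [left; apply (HrR (COrL c' (plug c fL))) | right; apply (HrR (COrL c' (plug c fR)))]; auto.
  - apply (IH (fun x => Q (Or k x)) (fun x => Q' (Or k x))) with c' gL gR; auto.
    + intros c0 x y; apply (HrL (COrR k c0)).
    + intros c0 x y; apply (HrR (COrR k c0)).
    + intros c0 x y; apply (Hi (COrR k c0)).
  - destruct HH as [HH|HH].
    + destruct (Hi c _ _ HH) as [A|A]; [left|right]; apply (HrL Hole); auto.
    + left; apply (HrR Hole); auto.
  - apply (IH (fun x => Q (Idis x k)) (fun x => Q' (Idis x k))) with c' gL gR; auto.
    + intros c0 x y; apply (HrL (CIdisL c0 k)).
    + intros c0 x y; apply (HrR (CIdisL c0 k)).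
    + intros c0 x y; apply (Hi (CIdisL c0 k)).
  - destruct HH as [HH|HH].
    + destruct (Hi (CIdisL c (plug c' gL)) _ _ HH) as [A|A]; simpl in *;
      [left; apply (HrL (CIdisR (plug c fL) c')) | right; apply (HrL (CIdisR (plug c fR) c'))]; auto.
    + destruct (Hi (CIdisL c (plug c' gR)) _ _ HH) as [A|A]; simpl in *;
      [left; apply (HrR (CIdisR (plug c fL) c')) | right; apply (HrR (CIdisR (plug c fR) c'))]; auto.
  - destruct HH as [HH|HH].
    + left; apply (HrL Hole); auto.
    + destruct (Hi c _ _ HH) as [A|A]; [left|right]; apply (HrR Hole); auto.
  - destruct HH as [HH|HH].
    + destruct (Hi (CIdisR (plug c' gL) c) _ _ HH) as [A|A]; simpl in *;
      [left; apply (HrL (CIdisL c' (plug c fL))) | right; apply (HrL (CIdisL c' (plug c fR)))]; auto.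
    + destruct (Hi (CIdisR (plug c' gR) c) _ _ HH) as [A|A]; simpl in *;
      [left; apply (HrR (CIdisL c' (plug c fL))) | right; apply (HrR (CIdisL c' (plug c fR)))]; auto.
  - apply (IH (fun x => Q (Idis k x)) (fun x => Q' (Idis k x))) with c' gL gR; auto.
    + intros c0 x y; apply (HrL (CIdisR k c0)).
    + intros c0 x y; apply (HrR (CIdisR k c0)).
    + intros c0 x y; apply (Hi (CIdisR k c0)).
Qed.

Lemma plug_not_classical : forall c x y, classical (plug c (Idis x y)) -> False.
Proof. induction c; simpl; intros; try tauto; firstorder eauto. Qed.

Lemma der0 : forall G D, der 0 G D -> False.
Proof. intros G D H; apply der_lst in H; inversion H. Qed.

Ltac noplug := match goal with
 | H : plug ?c (Idis _ _) = _ |- _ => destruct c; discriminate H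
 | H : _ = plug ?c (Idis _ _) |- _ => destruct c; discriminate H end.

Lemma inv_Lneg : forall n a G D, classical a -> der n (Neg a :: G) D -> der n G (a :: D).
Proof.
  induction n; intros a G D Ha H; [exfalso; eapply der0; eauto|].
  destruct (splitL n (Neg a) G D [] [a]) as [A|A]; auto.
  - repeat constructor; auto.
  - intros; apply IHn; auto.
  - destruct A as [(b & E & Hb & Hd)|[(f & g & E & _)|[(f & g & L & D0 & E & _)|[(c & x & y & E & _)|[(p & E & _)|E]]]]];
      try discriminate; try noplug.
    injection E; intros; subst. apply mono; auto.
Qed.

Lemma inv_Rneg : forall n a G D, der n G (Neg a :: D) -> der n (a :: G) D.
Proof.
  induction n; intros a G D H; [exfalso; eapply der0; eauto|].
  destruct (splitR n (Neg a) G D [a] []) as [A|A]; auto.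
  - intros; constructor.
  - intros; apply IHn; auto.
  - destruct A as [(b & E & Hb & Hd)|[(f & g & L & D0 & E & _)|[(f & g & E & _)|[(c & x & y & E & _)|(p & E & _)]]]];
      try discriminate; try noplug.
    injection E; intros; subst. apply mono; auto.
Qed.

Lemma inv_Land : forall n f g G D, der n (And f g :: G) D -> der n (f :: g :: G) D.
Proof.
  induction n; intros f g G D H; [exfalso; eapply der0; eauto|].
  destruct (splitL n (And f g) G D [f; g] []) as [A|A]; auto.
  - constructor.
  - intros; apply IHn; auto.
  - destruct A as [(b & E & Hb & Hd)|[(f' & g' & E & Hd)|[(f' & g' & L & D0 & E & _)|[(c & x & y & E & H1 & H2)|[(p & E & _)|E]]]]];
      try discriminate.
    + injection E; intros; subst. apply mono; auto.
    + destruct c; try discriminate E; simpl in E; injection E; intros; subst; simpl in *.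
      * apply IHn in H1. apply IHn in H2. apply der_Lidis; auto.
      * apply IHn in H1. apply IHn in H2.
        apply (dperm _ (plug c (Idis x y) :: f0 :: G) D); [ apply der_Lidis;
          [eapply dperm; [exact H1|apply perm_swap|apply Permutation_refl] | eapply dperm; [exact H2|apply perm_swap|apply Permutation_refl]]
          | apply perm_swap |apply Permutation_refl].
Qed.

Lemma inv_Rand : forall n f g G D, der n G (And f g :: D) -> der n G (f :: D) /\ der n G (g :: D).
Proof.
  induction n; intros f g G D H; [exfalso; eapply der0; eauto|]. split.
  - destruct (splitR n (And f g) G D [] [f]) as [A|A]; auto.
    + simpl; intros [Hf _]; constructor; auto.
    + intros ? ? H0; exact (proj1 (IHn _ _ _ _ H0)).
    + destruct A as [(b & E & Hb & Hd)|[(f' & g' & L & D0 & E & HL & HP & Hd1 & Hd2)|[(f' & g' & E & _)|[(c & x & y & E & Hd)|(p & E & _)]]]];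
        try discriminate.
      * injection E; intros; subst. apply mono. eapply (weak' _ _ _ [] D0); [exact Hd1|pcount|pcount].
      * destruct c; try discriminate E; simpl in E; injection E; intros; subst; simpl in *.
        -- destruct Hd as [Hd|Hd]; apply IHn in Hd as [Hd _]; [apply der_RidisL|apply der_RidisR]; auto.
        -- destruct Hd as [Hd|Hd]; apply IHn in Hd as [Hd _]; apply mono; auto.
  - destruct (splitR n (And f g) G D [] [g]) as [A|A]; auto.
    + simpl; intros [_ Hf]; constructor; auto.
    + intros ? ? H0; exact (proj2 (IHn _ _ _ _ H0)).
    + destruct A as [(b & E & Hb & Hd)|[(f' & g' & L & D0 & E & HL & HP & Hd1 & Hd2)|[(f' & g' & E & _)|[(c & x & y & E & Hd)|(p & E & _)]]]];
        try discriminate.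
      * injection E; intros; subst. apply mono. eapply (weak' _ _ _ [] D0); [exact Hd2|pcount|pcount].
      * destruct c; try discriminate E; simpl in E; injection E; intros; subst; simpl in *.
        -- destruct Hd as [Hd|Hd]; apply IHn in Hd as [_ Hd]; apply mono; auto.
        -- destruct Hd as [Hd|Hd]; apply IHn in Hd as [_ Hd]; [apply der_RidisL|apply der_RidisR]; auto.
Qed.

Lemma inv_Lor : forall n f g G D, der n (Or f g :: G) D -> der n (f :: G) D /\ der n (g :: G) D.
Proof.
  induction n; intros f g G D H; [exfalso; eapply der0; eauto|]. split.
  - destruct (splitL n (Or f g) G D [f] []) as [A|A]; auto.
    + constructor.
    + intros ? ? H0; exact (proj1 (IHn _ _ _ _ H0)).
    + destruct A as [(b & E & Hb & Hd)|[(f' & g' & E & Hd)|[(f' & g' & L & D0 & E & HL & HP & Hd1 & Hd2)|[(c & x & y & E & H1 & H2)|[(p & E & _)|E]]]]];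
        try discriminate.
      * injection E; intros; subst. apply mono. eapply (weak' _ _ _ [] D0); [exact Hd1|pcount|pcount].
      * destruct c; try discriminate E; simpl in E; injection E; intros; subst; simpl in *.
        -- apply IHn in H1 as [H1 _]. apply IHn in H2 as [H2 _]. apply der_Lidis; auto.
        -- apply IHn in H1 as [H1 _]. apply mono; auto.
  - destruct (splitL n (Or f g) G D [g] []) as [A|A]; auto.
    + constructor.
    + intros ? ? H0; exact (proj2 (IHn _ _ _ _ H0)).
    + destruct A as [(b & E & Hb & Hd)|[(f' & g' & E & Hd)|[(f' & g' & L & D0 & E & HL & HP & Hd1 & Hd2)|[(c & x & y & E & H1 & H2)|[(p & E & _)|E]]]]];
        try discriminate.
      * injection E; intros; subst. apply mono. eapply (weak' _ _ _ [] D0); [exact Hd2|pcount|pcount].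
      * destruct c; try discriminate E; simpl in E; injection E; intros; subst; simpl in *.
        -- apply IHn in H1 as [_ H1]. apply mono; auto.
        -- apply IHn in H1 as [_ H1]. apply IHn in H2 as [_ H2]. apply der_Lidis; auto.
Qed.

Lemma inv_Ror : forall n f g G D, der n G (Or f g :: D) -> der n G (f :: g :: D).
Proof.
  induction n; intros f g G D H; [exfalso; eapply der0; eauto|].
  destruct (splitR n (Or f g) G D [] [f; g]) as [A|A]; auto.
  - simpl; intros [Hf Hg]; repeat constructor; auto.
  - intros; apply IHn; auto.
  - destruct A as [(b & E & Hb & Hd)|[(f' & g' & L & D0 & E & HL & HP & Hd1 & Hd2)|[(f' & g' & E & Hd)|[(c & x & y & E & Hd)|(p & E & _)]]]];
      try discriminate.
    + injection E; intros; subst. apply mono; auto.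
    + destruct c; try discriminate E; simpl in E; injection E; intros; subst; simpl in *.
      * destruct Hd as [Hd|Hd]; apply IHn in Hd; [apply der_RidisL|apply der_RidisR]; auto.
      * destruct Hd as [Hd|Hd]; apply IHn in Hd.
        -- eapply dperm; [apply (der_RidisL n G (f0 :: D) c x y); eapply dperm; [exact Hd|apply Permutation_refl|apply perm_swap] | apply Permutation_refl | apply perm_swap].
        -- eapply dperm; [apply (der_RidisR n G (f0 :: D) c x y); eapply dperm; [exact Hd|apply Permutation_refl|apply perm_swap] | apply Permutation_refl | apply perm_swap].
Qed.

Lemma inv_Lidis : forall n c x y G D, der n (plug c (Idis x y) :: G) D ->
  der n (plug c x :: G) D /\ der n (plug c y :: G) D.
Proof.
  induction n; intros c x y G D H; [exfalso; eapply der0; eauto|].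
  assert (K : PL n (plug c (Idis x y)) G D -> der (S n) (plug c x :: G) D /\ der (S n) (plug c y :: G) D).
  { intros A.
    destruct A as [(b & E & Hb & Hd)|[(f & g & E & Hd)|[(f & g & L & D0 & E & HL & HP & Hd1 & Hd2)|[(c' & x' & y' & E & H1 & H2)|[(p & E & _)|E]]]]];
      try noplug.
    - destruct c; try discriminate E; simpl in E; injection E; intros; subst; simpl in *.
      + apply IHn in Hd as [A1 A2]. split; apply der_Land; auto.
      + assert (Hd' : der n (plug c (Idis x y) :: f :: G) D) by (eapply dperm; [exact Hd|apply perm_swap|apply Permutation_refl]).
        apply IHn in Hd' as [A1 A2]. split; apply der_Land; [eapply dperm; [exact A1|apply perm_swap|apply Permutation_refl]|eapply dperm; [exact A2|apply perm_swap|apply Permutation_refl]].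
    - destruct c; try discriminate E; simpl in E; injection E; intros; subst; simpl in *.
      + apply IHn in Hd1 as [A1 A2]. split; [eapply dperm; [apply (der_Lor n G L D0 (plug c x)); eauto | apply Permutation_refl | apply Permutation_sym; exact HP]|eapply dperm; [apply (der_Lor n G L D0 (plug c y)); eauto | apply Permutation_refl | apply Permutation_sym; exact HP]].
      + apply IHn in Hd2 as [A1 A2]. split; [eapply dperm; [apply (der_Lor n G L D0 f (plug c x)); eauto | apply Permutation_refl | apply Permutation_sym; exact HP]|eapply dperm; [apply (der_Lor n G L D0 f (plug c y)); eauto | apply Permutation_refl | apply Permutation_sym; exact HP]].
    - eapply (overlapL c (fun z => der n (z :: G) D) (fun z => der (S n) (z :: G) D));
        [intros; apply mono; auto | intros; apply der_Lidis; auto | intros; apply IHn; auto | exact E | exact H1 | exact H2]. }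
  destruct (splitL n (plug c (Idis x y)) G D [plug c x] []) as [A1|P];
    [constructor | intros ? ? H0; exact (proj1 (IHn _ _ _ _ _ H0)) | exact H | | apply K; exact P].
  destruct (splitL n (plug c (Idis x y)) G D [plug c y] []) as [A2|P];
    [constructor | intros ? ? H0; exact (proj2 (IHn _ _ _ _ _ H0)) | exact H | | apply K; exact P].
  split; auto.
Qed.

Lemma splitRd n X Y1 Y2 G D : ~ classical X -> classicals G ->
  (forall G D, classicals G -> der n G (X::D) -> der n G (Y1::D) \/ der n G (Y2::D)) ->
  der (S n) G (X::D) -> (der (S n) G (Y1::D) \/ der (S n) G (Y2::D)) \/ PR n X G D.
Proof.
  intros HX HG IH H. apply der_lst in H. inversion H; subst.
  - destruct (perm_cons_cases _ _ _ _ H2) as [[-> _]|[k [Hk1 Hk2]]].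
    + right. do 4 right. exists p; split; auto. apply (Permutation_in _ (Permutation_sym H1)); left; auto.
    + left; left. eapply dperm; [apply (der_ax n G1 (Y1 :: k) p) | pcount | pcount].
  - left; left. eapply dperm; [apply (der_bot n G1 (Y1 :: D)) | pcount | pcount].
  - destruct (cls_tail _ _ _ HG H3) as [_ HG1].
    left. destruct (IH G1 (a :: D) HG1 (dperm _ _ _ _ (X :: a :: D) H2 (Permutation_refl _) ltac:(pcount))) as [Hi|Hi]; [left|right].
    + eapply dperm; [apply (der_Lneg n G1 (Y1 :: D) a); auto; eapply dperm; [exact Hi|apply Permutation_refl|pcount] | pcount | pcount].
    + eapply dperm; [apply (der_Lneg n G1 (Y2 :: D) a); auto; eapply dperm; [exact Hi|apply Permutation_refl|pcount] | pcount | pcount].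
  - destruct (perm_cons_cases _ _ _ _ H3) as [[-> Hp]|[k [Hk1 Hk2]]].
    + right. left. exists a; repeat split; auto. eapply dperm; [exact H2|pcount|pcount].
    + left. destruct (IH (a :: G) k (Forall_cons _ H1 HG) (dperm _ _ _ _ (X :: k) H2 (Permutation_refl _) ltac:(pcount))) as [Hi|Hi]; [left|right].
      * eapply dperm; [apply (der_Rneg n G (Y1 :: k) a); auto | pcount | pcount].
      * eapply dperm; [apply (der_Rneg n G (Y2 :: k) a); auto | pcount | pcount].
  - destruct (cls_tail _ _ _ HG H2) as [[Hf Hg] HG1].
    left. destruct (IH (f :: g :: G1) D (Forall_cons _ Hf (Forall_cons _ Hg HG1)) H1) as [Hi|Hi]; [left|right].
    + eapply dperm; [apply (der_Land n G1 (Y1 :: D) f g); auto | pcount | pcount].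
    + eapply dperm; [apply (der_Land n G1 (Y2 :: D) f g); auto | pcount | pcount].
  - destruct (perm_cons_cases _ _ _ _ H4) as [[-> Hp]|[k [Hk1 Hk2]]].
    + right. right. left. exists f, g, L, D1; repeat split; auto.
    + destruct (perm_app_cases _ _ _ _ (Permutation_sym Hk2)) as [[L1 [Ha Hb]]|[M1 [Ha Hb]]].
      * destruct (cls_tail _ _ _ H1 Ha) as [HX' _]. contradiction.
      * left; left. eapply dperm; [apply (der_Rand n G L (Y1 :: M1) f g); auto | pcount | pcount].
  - destruct (perm_app_cases _ _ _ _ H5) as [[L1 [Ha Hb]]|[M1 [Ha Hb]]].
    + destruct (cls_tail _ _ _ H1 Ha) as [HX' _]. contradiction.
    + left; left. eapply dperm; [apply (der_Lor n G1 L (Y1 :: M1) f g); auto | pcount | pcount].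
  - destruct (perm_cons_cases _ _ _ _ H2) as [[-> Hp]|[k [Hk1 Hk2]]].
    + right. right. right. left. exists f, g; split; auto. eapply dperm; [exact H1|pcount|pcount].
    + left. destruct (IH G (f :: g :: k) HG (dperm _ _ _ _ (X :: f :: g :: k) H1 (Permutation_refl _) ltac:(pcount))) as [Hi|Hi]; [left|right].
      * eapply dperm; [apply (der_Ror n G (Y1 :: k) f g); eapply dperm; [exact Hi|apply Permutation_refl|pcount] | pcount | pcount].
      * eapply dperm; [apply (der_Ror n G (Y2 :: k) f g); eapply dperm; [exact Hi|apply Permutation_refl|pcount] | pcount | pcount].
  - destruct (cls_tail _ _ _ HG H3) as [Hc _]. exfalso; eapply plug_not_classical; eauto.
  - destruct (perm_cons_cases _ _ _ _ H2) as [[-> Hp]|[k [Hk1 Hk2]]].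
    + right. right. right. right. left. exists c, fL, fR; split; auto. left. eapply dperm; [exact H1|pcount|pcount].
    + left. destruct (IH G (plug c fL :: k) HG (dperm _ _ _ _ (X :: plug c fL :: k) H1 (Permutation_refl _) ltac:(pcount))) as [Hi|Hi]; [left|right].
      * eapply dperm; [apply (der_RidisL n G (Y1 :: k) c fL fR); eapply dperm; [exact Hi|apply Permutation_refl|pcount] | pcount | pcount].
      * eapply dperm; [apply (der_RidisL n G (Y2 :: k) c fL fR); eapply dperm; [exact Hi|apply Permutation_refl|pcount] | pcount | pcount].
  - destruct (perm_cons_cases _ _ _ _ H2) as [[-> Hp]|[k [Hk1 Hk2]]].
    + right. right. right. right. left. exists c, fL, fR; split; auto. right. eapply dperm; [exact H1|pcount|pcount].
    + left. destruct (IH G (plug c fR :: k) HG (dperm _ _ _ _ (X :: plug c fR :: k) H1 (Permutation_refl _) ltac:(pcount))) as [Hi|Hi]; [left|right].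
      * eapply dperm; [apply (der_RidisR n G (Y1 :: k) c fL fR); eapply dperm; [exact Hi|apply Permutation_refl|pcount] | pcount | pcount].
      * eapply dperm; [apply (der_RidisR n G (Y2 :: k) c fL fR); eapply dperm; [exact Hi|apply Permutation_refl|pcount] | pcount | pcount].
Qed.

Lemma inv_Ridis : forall n c x y Xi D, classicals Xi -> der n Xi (plug c (Idis x y) :: D) ->
  der n Xi (plug c x :: D) \/ der n Xi (plug c y :: D).
Proof.
  induction n; intros c x y Xi D HXi H; [exfalso; eapply der0; eauto|].
  destruct (splitRd n (plug c (Idis x y)) (plug c x) (plug c y) Xi D) as [A|A];
    [intro Hc; eapply plug_not_classical; eauto | exact HXi | intros ? ? HG H0; apply IHn; auto | exact H | exact A | ].
  destruct A as [(b & E & Hb & Hd)|[(f & g & L & D0 & E & HL & HP & Hd1 & Hd2)|[(f & g & E & Hd)|[(c' & x' & y' & E & Hd)|(p & E & _)]]]];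
    try noplug.
  - destruct c; try discriminate E; simpl in E; injection E; intros; subst; simpl in *.
    + destruct (IHn _ _ _ _ _ HXi Hd1) as [Hi|Hi]; [left|right].
      * eapply dperm; [apply (der_Rand n Xi L D0 (plug c x) g); eauto | apply Permutation_refl | pcount].
      * eapply dperm; [apply (der_Rand n Xi L D0 (plug c y) g); eauto | apply Permutation_refl | pcount].
    + destruct (IHn _ _ _ _ _ HXi Hd2) as [Hi|Hi]; [left|right].
      * eapply dperm; [apply (der_Rand n Xi L D0 f (plug c x)); eauto | apply Permutation_refl | pcount].
      * eapply dperm; [apply (der_Rand n Xi L D0 f (plug c y)); eauto | apply Permutation_refl | pcount].
  - destruct c; try discriminate E; simpl in E; injection E; intros; subst; simpl in *.
    + destruct (IHn _ _ _ _ (g :: D) HXi Hd) as [Hi|Hi]; [left|right]; apply der_Ror; auto.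
    + assert (Hd' : der n Xi (plug c (Idis x y) :: f :: D)) by (eapply dperm; [exact Hd|apply Permutation_refl|apply perm_swap]).
      destruct (IHn _ _ _ _ _ HXi Hd') as [Hi|Hi]; [left|right]; apply der_Ror;
        (eapply dperm; [exact Hi|apply Permutation_refl|apply perm_swap]).
  - eapply (overlapR c (fun z => der n Xi (z :: D)) (fun z => der (S n) Xi (z :: D)));
      [intros; apply mono; auto | intros; apply der_RidisL; auto | intros; apply der_RidisR; auto
      | intros; apply IHn; auto | exact E | exact Hd].
Qed.

Theorem lemma4p2 :
  forall (n : nat) (G D Xi : list form) (f g a fL fR : form) (c : ctx),
    1 <= n ->
    wfs G -> wfs D -> classicals Xi -> wf f -> wf g -> classical a ->
    wf fL -> wf fR -> wfc c ->
    (* (L neg) *)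
    (der n (Neg a :: G) D -> der n G (a :: D)) /\
    (* (R neg) *)
    (der n G (Neg a :: D) -> der n (a :: G) D) /\
    (* (L and) *)
    (der n (And f g :: G) D -> der n (f :: g :: G) D) /\
    (* (R and) *)
    (der n G (And f g :: D) -> der n G (f :: D) /\ der n G (g :: D)) /\
    (* (L or) *)
    (der n (Or f g :: G) D -> der n (f :: G) D /\ der n (g :: G) D) /\
    (* (R or) *)
    (der n G (Or f g :: D) -> der n G (f :: g :: D)) /\
    (* (L idis) *)
    (der n (plug c (Idis fL fR) :: G) D ->
       der n (plug c fL :: G) D /\ der n (plug c fR :: G) D) /\
    (* (R idis) *)
    (der n Xi (plug c (Idis fL fR) :: D) ->
       der n Xi (plug c fL :: D) \/ der n Xi (plug c fR :: D)).
Proof.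
  intros n G D Xi f g a fL fR c _ _ _ HXi _ _ Ha _ _ _.
  split; [intro H; apply inv_Lneg; auto|].
  split; [intro H; apply inv_Rneg; auto|].
  split; [intro H; apply inv_Land; auto|].
  split; [intro H; apply inv_Rand; auto|].
  split; [intro H; apply inv_Lor; auto|].
  split; [intro H; apply inv_Ror; auto|].
  split; [intro H; apply inv_Lidis; auto|].
  intro H; apply inv_Ridis; auto.
Qed.
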